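(* Let $\mathcal O\subset\mathbb R^2$ be a connected open set and let $\mathcal M=(\mathcal O,\Gamma)$ be an affine surface. Suppose there exist real linear functions $L_1,L_2,L_3$ such that $\{e^{L_1}\cos(L_2),e^{L_1}\sin(L_2),e^{L_3}\}$ is a basis of $\mathcal Q(\mathcal M)$. Then $\Gamma$ has constant Christoffel symbols (i.e. is Type $\mathcal A$), and $\Gamma$ is linearly equivalent to one of: $\Gamma_c^2(b_1,b_2)$ for some $b_1\neq1$ with $(b_1,b_2)\neq(0,0)$; $\Gamma_5^1(c)$ for some $c\in\mathbb R$; or $\Gamma_5^0$.
   Context: An affine manifold $(M,\nabla)$ is a smooth manifold $M$ of dimension $m\ge 2$ with a torsion-free connection $\nabla$ on $TM$; in local coordinates $\nabla_{\partial_{x^i}}\partial_{x^j}=\Gamma_{ij}^k\partial_{x^k}$ (summation over repeated indices). The curvature is $R(X,Y)Z=\nabla_X\nabla_YZ-\nabla_Y\nabla_XZ-\nabla_{[X,Y]}Z$, the Ricci tensor is $\rho(Y,Z)=\mathrm{Tr}(X\mapsto R(X,Y)Z)$, and $\rho_s(X,Y)=\frac12(\rho(X,Y)+\rho(Y,X))$. The Hessian is $\mathcal H_\nabla f=(\partial_{x^i}\partial_{x^j}f-\Gamma_{ij}^k\partial_{x^k}f)\,dx^i\otimes dx^j$. The quasi-Einstein solution space is $\mathcal Q(M,\nabla)=\{f\in C^\infty(M):\mathcal H_\nabla f+\frac{1}{m-1}f\rho_s=0\}$. For real constants, $\Gamma(a,b,c,d,e,f)$ denotes the connection on (an open subset of)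 $\mathbb R^2$ whose Christoffel symbols in the standard coordinates $(x^1,x^2)$ are the constants $\Gamma_{11}^1=a$, $\Gamma_{11}^2=b$, $\Gamma_{12}^1=\Gamma_{21}^1=c$, $\Gamma_{12}^2=\Gamma_{21}^2=d$, $\Gamma_{22}^1=e$, $\Gamma_{22}^2=f$. Two connections with constant Christoffel symbols are linearly equivalent if there is $T\in GL(2,\mathbb R)$ with $T^*\nabla_2=\nabla_1$. A real linear function is $L(x^1,x^2)=\alpha_1x^1+\alpha_2x^2$, $\alpha_i\in\mathbb R$. The specific connections: for $b_1\ne1$, $\Gamma_c^2(b_1,b_2):=\Gamma(1+b_1,0,b_2,1,\frac{1+b_2^2}{b_1-1},0)$; $\Gamma_5^1(c):=\Gamma(1,0,0,0,1+c^2,2c)$; $\Gamma_5^0:=\Gamma(1,0,0,1,-1,0)$. *)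

(* Defs.v *)
From Stdlib Require Import Reals Lra List ClassicalEpsilon.
Open Scope R_scope.

(* Coordinate indices on R^2: I1 ~ x^1, I2 ~ x^2 *)
Inductive idx := I1 | I2.

Definition sum_idx (g : idx -> R) : R := g I1 + g I2.

Definition fn2 := R -> R -> R.

Definition dist2 (x y u v : R) : R := (u - x)^2 + (v - y)^2.

Definition is_open (O : R -> R -> Prop) : Prop :=
  forall x y, O x y -> exists eps, 0 < eps /\
    forall u v, dist2 x y u v < eps^2 -> O u v.

Definition is_connected (O : R -> R -> Prop) : Prop :=
  forall A B : R -> R -> Prop, is_open A -> is_open B ->
    (forall x y, O x y <-> (A x y \/ B x y)) ->
    (forall x y, ~ (A x y /\ B x y)) ->
    (forall x y, ~ A x y) \/ (forall x y, ~ B x y).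

Definition has_partial (i : idx) (g : fn2) (x y l : R) : Prop :=
  match i with
  | I1 => derivable_pt_lim (fun t => g t y) x l
  | I2 => derivable_pt_lim (fun t => g x t) y l
  end.

(* the partial derivative function (meaningful where it exists) *)
Definition pd (i : idx) (g : fn2) : fn2 :=
  fun x y => epsilon (inhabits 0) (fun l => has_partial i g x y l).

Fixpoint iterD (w : list idx) (f : fn2) : fn2 :=
  match w with
  | nil => f
  | i :: w' => pd i (iterD w' f)
  end.

Definition continuous2_at (g : fn2) (x y : R) : Prop :=
  forall eps, 0 < eps -> exists delta, 0 < delta /\
    forall u v, dist2 x y u v < delta^2 -> Rabs (g u v - g x y) < eps.

Definition smooth_on (O : R -> R -> Prop) (f : fn2) : Prop :=
  forall (w : list idx) x y, O x y ->
    continuous2_at (iterD w f) x y /\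
    forall i, exists l, has_partial i (iterD w f) x y l.

(* A torsion-free connection on (an open subset of) R^2, given by its
   Christoffel symbols Gamma_{ij}^k (Gamma_{12} = Gamma_{21}). *)
Record conn := mkConn {
  G11_1 : fn2; G11_2 : fn2; G12_1 : fn2; G12_2 : fn2; G22_1 : fn2; G22_2 : fn2 }.

(* Gam c i j k = Gamma_{ij}^k *)
Definition Gam (c : conn) (i j k : idx) : fn2 :=
  match i, j, k with
  | I1, I1, I1 => G11_1 c | I1, I1, I2 => G11_2 c
  | I1, I2, I1 => G12_1 c | I1, I2, I2 => G12_2 c
  | I2, I1, I1 => G12_1 c | I2, I1, I2 => G12_2 c
  | I2, I2, I1 => G22_1 c | I2, I2, I2 => G22_2 c
  end.

Definition affine_surface (O : R -> R -> Prop) (c : conn) : Prop :=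
  forall i j k, smooth_on O (Gam c i j k).

(* Curvature components: R(d_i, d_j) d_k = Rm c i j k l * d_l *)
Definition Rm (c : conn) (i j k l : idx) : fn2 := fun x y =>
  pd i (Gam c j k l) x y - pd j (Gam c i k l) x y
  + sum_idx (fun m => Gam c j k m x y * Gam c i m l x y
                      - Gam c i k m x y * Gam c j m l x y).

(* Ricci tensor rho(d_j, d_k) = Tr (X |-> R(X, d_j) d_k) *)
Definition ricci (c : conn) (j k : idx) : fn2 := fun x y =>
  sum_idx (fun i => Rm c i j k i x y).

Definition ricci_s (c : conn) (j k : idx) : fn2 := fun x y =>
  (ricci c j k x y + ricci c k j x y) / 2.

Definition hessian (c : conn) (f : fn2) (i j : idx) : fn2 := fun x y =>
  pd i (pd j f) x y - sum_idx (fun k => Gam c i j k x y * pd k f x y).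

(* Quasi-Einstein solution space, m = 2 so 1/(m-1) = 1 *)
Definition in_Q (O : R -> R -> Prop) (c : conn) (f : fn2) : Prop :=
  smooth_on O f /\
  forall x y, O x y -> forall i j,
    hessian c f i j x y + (1 / (2 - 1)) * f x y * ricci_s c i j x y = 0.

Definition is_basis3_Q (O : R -> R -> Prop) (c : conn) (f1 f2 f3 : fn2) : Prop :=
  in_Q O c f1 /\ in_Q O c f2 /\ in_Q O c f3 /\
  (forall a1 a2 a3 : R,
     (forall x y, O x y -> a1 * f1 x y + a2 * f2 x y + a3 * f3 x y = 0) ->
     a1 = 0 /\ a2 = 0 /\ a3 = 0) /\
  (forall f, in_Q O c f -> exists a1 a2 a3 : R,
     forall x y, O x y -> f x y = a1 * f1 x y + a2 * f2 x y + a3 * f3 x y).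

(* Connections with constant Christoffel symbols:
   Gamma(a,b,c,d,e,f) with G11^1=a, G11^2=b, G12^1=c, G12^2=d, G22^1=e, G22^2=f *)
Record cconn := CC { ca : R; cb : R; cc : R; cd : R; ce : R; cf : R }.

Definition cGam (g : cconn) (i j k : idx) : R :=
  match i, j, k with
  | I1, I1, I1 => ca g | I1, I1, I2 => cb g
  | I1, I2, I1 => cc g | I1, I2, I2 => cd g
  | I2, I1, I1 => cc g | I2, I1, I2 => cd g
  | I2, I2, I1 => ce g | I2, I2, I2 => cf g
  end.

Definition const_on (O : R -> R -> Prop) (c : conn) (g : cconn) : Prop :=
  forall x y, O x y -> forall i j k, Gam c i j k x y = cGam g i j k.

(* Linear equivalence: T in GL(2,R) with T^* nabla_2 = nabla_1, i.e. for the
   linear map x = T y,  T_{kc} G1_{ab}^c = T_{ia} T_{jb} G2_{ij}^k. *)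
Definition lin_equiv (g1 g2 : cconn) : Prop :=
  exists T : idx -> idx -> R,
    T I1 I1 * T I2 I2 - T I1 I2 * T I2 I1 <> 0 /\
    forall a b k,
      sum_idx (fun c => T k c * cGam g1 a b c) =
      sum_idx (fun i => sum_idx (fun j => T i a * T j b * cGam g2 i j k)).

Definition Gc2 (b1 b2 : R) : cconn :=
  CC (1 + b1) 0 b2 1 ((1 + b2^2) / (b1 - 1)) 0.
Definition G51 (c : R) : cconn := CC 1 0 0 0 (1 + c^2) (2 * c).
Definition G50 : cconn := CC 1 0 0 1 (-1) 0.

Definition linfun (a1 a2 : R) : fn2 := fun x y => a1 * x + a2 * y.

(* Main.v *)
Require Import Defs.
From Stdlib Require Import Reals Lra Psatz ClassicalEpsilon FunctionalExtensionality Classical.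
From Coquelicot Require Coquelicot.
Open Scope R_scope.

Definition sel (i : idx) (p1 p2 : R) : R := match i with I1 => p1 | I2 => p2 end.

Definition fam (a1 a2 b1 b2 u v : R) : fn2 := fun x y =>
  exp (a1 * x + a2 * y) * (u * cos (b1 * x + b2 * y) + v * sin (b1 * x + b2 * y)).

Lemma pd_eq i g F : (forall x y, has_partial i g x y (F x y)) -> pd i g = F.
Proof.
  intros H. apply functional_extensionality; intro x.
  apply functional_extensionality; intro y.
  unfold pd.
  assert (Hex : exists l, has_partial i g x y l) by (exists (F x y); apply H).
  pose proof (epsilon_spec (inhabits 0) _ Hex) as Hs.
  specialize (H x y).
  destruct i; simpl in *; eapply uniqueness_limite; eauto.
Qed.

Module HPF.
Import Coquelicot.Coquelicot.
Lemma hp_fam i a1 a2 b1 b2 u v x y :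
  has_partial i (fam a1 a2 b1 b2 u v) x y
    (fam a1 a2 b1 b2 (sel i a1 a2 * u + sel i b1 b2 * v) (sel i a1 a2 * v - sel i b1 b2 * u) x y).
Proof.
  destruct i; simpl; apply is_derive_Reals; unfold fam;
  auto_derive; auto; ring.
Qed.

End HPF.
Import HPF.

Lemma pd_fam i a1 a2 b1 b2 u v :
  pd i (fam a1 a2 b1 b2 u v) =
  fam a1 a2 b1 b2 (sel i a1 a2 * u + sel i b1 b2 * v) (sel i a1 a2 * v - sel i b1 b2 * u).
Proof. apply pd_eq. intros; apply hp_fam. Qed.

Lemma eqs O c a1 a2 b1 b2 d1 d2 x y :
  in_Q O c (fam a1 a2 b1 b2 1 0) -> in_Q O c (fam a1 a2 b1 b2 0 1) ->
  in_Q O c (fam d1 d2 0 0 1 0) -> O x y -> forall i j,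
  sel i a1 a2 * sel j a1 a2 - sel i b1 b2 * sel j b1 b2 - sel i d1 d2 * sel j d1 d2
    = Gam c i j I1 x y * (a1 - d1) + Gam c i j I2 x y * (a2 - d2) /\
  sel i a1 a2 * sel j b1 b2 + sel i b1 b2 * sel j a1 a2
    = Gam c i j I1 x y * b1 + Gam c i j I2 x y * b2.
Proof.
  intros [_ H1] [_ H2] [_ H3] Hxy i j.
  specialize (H1 x y Hxy i j); specialize (H2 x y Hxy i j); specialize (H3 x y Hxy i j).
  unfold hessian, sum_idx in H1, H2, H3.
  rewrite !pd_fam in H1, H2, H3. unfold fam in H1, H2, H3. simpl sel in H1, H2, H3.
  replace (1 / (2 - 1)) with 1 in H1, H2, H3 by field.
  replace (0 * x + 0 * y) with 0 in H3 by ring.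
  rewrite cos_0, sin_0 in H3.
  replace (sel i 0 0) with 0 in H3 by (destruct i; reflexivity).
  replace (sel j 0 0) with 0 in H3 by (destruct j; reflexivity).
  set (E := exp (a1 * x + a2 * y)) in *.
  set (E3 := exp (d1 * x + d2 * y)) in *.
  set (C := cos (b1 * x + b2 * y)) in *.
  set (S := sin (b1 * x + b2 * y)) in *.
  set (G1 := Gam c i j I1 x y) in *.
  set (G2 := Gam c i j I2 x y) in *.
  set (r := ricci_s c i j x y) in *.
  assert (HE : 0 < E) by apply exp_pos.
  assert (HE3 : 0 < E3) by apply exp_pos.
  assert (HCS : C * C + S * S = 1) by (unfold C, S; pose proof (sin2_cos2 (b1 * x + b2 * y)) as HH; unfold Rsqr in HH; lra).
  set (ai := sel i a1 a2) in *. set (aj := sel j a1 a2) in *.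
  set (bi := sel i b1 b2) in *. set (bj := sel j b1 b2) in *.
  set (di := sel i d1 d2) in *. set (dj := sel j d1 d2) in *.
  set (Xr := ai*aj - bi*bj - (G1 * a1 + G2 * a2) + r).
  set (Xi := ai*bj + bi*aj - (G1 * b1 + G2 * b2)).
  assert (K1 : E * (Xr * C - Xi * S) = 0) by (unfold Xr, Xi; lra).
  assert (K2 : E * (Xi * C + Xr * S) = 0) by (unfold Xr, Xi; lra).
  assert (K3 : E3 * (di*dj - (G1 * d1 + G2 * d2) + r) = 0) by lra.
  apply Rmult_integral in K1; destruct K1 as [K1|K1]; [lra|].
  apply Rmult_integral in K2; destruct K2 as [K2|K2]; [lra|].
  apply Rmult_integral in K3; destruct K3 as [K3|K3]; [lra|].
  assert (HXr : Xr = 0).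
  { rewrite <- (Rmult_1_r Xr), <- HCS.
    replace (Xr * (C * C + S * S)) with (C * (Xr * C - Xi * S) + S * (Xi * C + Xr * S)) by ring.
    rewrite K1, K2; ring. }
  assert (HXi : Xi = 0).
  { rewrite <- (Rmult_1_r Xi), <- HCS.
    replace (Xi * (C * C + S * S)) with (C * (Xi * C + Xr * S) - S * (Xr * C - Xi * S)) by ring.
    rewrite K1, K2; ring. }
  unfold Xr, Xi in *. split; lra.
Qed.

Lemma lin_trans g1 g2 g3 : lin_equiv g1 g2 -> lin_equiv g2 g3 -> lin_equiv g1 g3.
Proof.
  intros [T [HdT HT]] [S [HdS HS]].
  exists (fun k c => S k I1 * T I1 c + S k I2 * T I2 c). split.
  - intro H. apply HdT.
    assert (E : (S I1 I1 * T I1 I1 + S I1 I2 * T I2 I1) * (S I2 I1 * T I1 I2 + S I2 I2 * T I2 I2) -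
      (S I1 I1 * T I1 I2 + S I1 I2 * T I2 I2) * (S I2 I1 * T I1 I1 + S I2 I2 * T I2 I1)
      = (S I1 I1 * S I2 I2 - S I1 I2 * S I2 I1) * (T I1 I1 * T I2 I2 - T I1 I2 * T I2 I1)) by ring.
    rewrite E in H. apply Rmult_integral in H. destruct H; [contradiction|assumption].
  - intros a b k.
    transitivity (S k I1 * sum_idx (fun c => T I1 c * cGam g1 a b c)
                + S k I2 * sum_idx (fun c => T I2 c * cGam g1 a b c)).
    { unfold sum_idx; ring. }
    rewrite !HT.
    transitivity (T I1 a * T I1 b * sum_idx (fun m => S k m * cGam g2 I1 I1 m)
      + T I1 a * T I2 b * sum_idx (fun m => S k m * cGam g2 I1 I2 m)
      + T I2 a * T I1 b * sum_idx (fun m => S k m * cGam g2 I2 I1 m)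
      + T I2 a * T I2 b * sum_idx (fun m => S k m * cGam g2 I2 I2 m)).
    { unfold sum_idx; ring. }
    rewrite !HS. unfold sum_idx; ring.
Qed.

Definition Gp (p q : R) : cconn := CC (1 + 2 * p) 0 q (1 + p) (-1) (2 * q).

Lemma step1 (a1 a2 b1 b2 d1 d2 e1 e2 p q : R) (G : idx -> idx -> idx -> R) :
  a1 = d1 + e1 -> a2 = d2 + e2 -> d1 = e1 * p + b1 * q -> d2 = e2 * p + b2 * q ->
  e1 * b2 - e2 * b1 <> 0 ->
  (forall i j,
    sel i a1 a2 * sel j a1 a2 - sel i b1 b2 * sel j b1 b2 - sel i d1 d2 * sel j d1 d2
      = G i j I1 * (a1 - d1) + G i j I2 * (a2 - d2) /\
    sel i a1 a2 * sel j b1 b2 + sel i b1 b2 * sel j a1 a2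
      = G i j I1 * b1 + G i j I2 * b2) ->
  lin_equiv (CC (G I1 I1 I1) (G I1 I1 I2) (G I1 I2 I1) (G I1 I2 I2) (G I2 I2 I1) (G I2 I2 I2)) (Gp p q).
Proof.
  intros -> -> -> -> HD H.
  exists (fun k c => match k with I1 => sel c e1 e2 | I2 => sel c b1 b2 end).
  split; [simpl; lra|].
  destruct (H I1 I1) as [P11 Q11]; destruct (H I1 I2) as [P12 Q12];
  destruct (H I2 I2) as [P22 Q22]; simpl in *.
  intros a b k; destruct a, b, k; unfold sum_idx; simpl; lra.
Qed.

Lemma stepA q : lin_equiv (Gp (-1) q) (G51 q).
Proof.
  exists (fun k c => match k, c with I1, I1 => -1 | I1, I2 => q | I2, I1 => 0 | I2, I2 => 1 end).
  split; [lra|]. intros a b k; destruct a, b, k; unfold sum_idx, Gp, G51; simpl; ring.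
Qed.

Lemma stepB : lin_equiv (Gp 0 0) G50.
Proof.
  exists (fun k c => match k, c with I1, I1 => 1 | I1, I2 => 0 | I2, I1 => 0 | I2, I2 => 1 end).
  split; [lra|]. intros a b k; destruct a, b, k; unfold sum_idx, Gp, G50; simpl; ring.
Qed.

Lemma stepC p q : 1 + p <> 0 -> lin_equiv (Gp p q) (Gc2 (p / (1 + p)) (q / (1 + p))).
Proof.
  intros Hp.
  assert (Hb : p / (1 + p) - 1 <> 0).
  { replace (p / (1 + p) - 1) with (- / (1 + p)) by (field; auto).
    apply Ropp_neq_0_compat, Rinv_neq_0_compat; auto. }
  exists (fun k c => match k, c with I1, I1 => 1 + p | I1, I2 => q | I2, I1 => 0 | I2, I2 => 1 end).
  split; [simpl; lra|]. intros a b k; destruct a, b, k; unfold sum_idx, Gp, Gc2; simpl; field; split; auto; lra.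
Qed.

Lemma uniq2 e1 e2 b1 b2 u1 u2 v1 v2 : e1 * b2 - e2 * b1 <> 0 ->
  u1 * e1 + u2 * e2 = v1 * e1 + v2 * e2 -> u1 * b1 + u2 * b2 = v1 * b1 + v2 * b2 ->
  u1 = v1 /\ u2 = v2.
Proof.
  intros HD H1 H2.
  assert (X1 : u1 * e1 + u2 * e2 - (v1 * e1 + v2 * e2) = 0) by lra.
  assert (X2 : u1 * b1 + u2 * b2 - (v1 * b1 + v2 * b2) = 0) by lra.
  assert (A1 : (u1 - v1) * (e1 * b2 - e2 * b1) = 0).
  { replace ((u1 - v1) * (e1 * b2 - e2 * b1)) with
      (b2 * (u1 * e1 + u2 * e2 - (v1 * e1 + v2 * e2)) - e2 * (u1 * b1 + u2 * b2 - (v1 * b1 + v2 * b2))) by ring.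
    rewrite X1, X2; ring. }
  assert (A2 : (u2 - v2) * (e1 * b2 - e2 * b1) = 0).
  { replace ((u2 - v2) * (e1 * b2 - e2 * b1)) with
      (e1 * (u1 * b1 + u2 * b2 - (v1 * b1 + v2 * b2)) - b1 * (u1 * e1 + u2 * e2 - (v1 * e1 + v2 * e2))) by ring.
    rewrite X1, X2; ring. }
  apply Rmult_integral in A1; apply Rmult_integral in A2. split.
  - destruct A1; [lra|contradiction].
  - destruct A2; [lra|contradiction].
Qed.

Theorem theorem2p7 (O : R -> R -> Prop) (c : conn) :
  is_open O -> is_connected O -> affine_surface O c ->
  (exists a1 a2 b1 b2 d1 d2 : R,
     is_basis3_Q O c
       (fun x y => exp (linfun a1 a2 x y) * cos (linfun b1 b2 x y))
       (fun x y => exp (linfun a1 a2 x y) * sin (linfun b1 b2 x y))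
       (fun x y => exp (linfun d1 d2 x y))) ->
  exists g : cconn, const_on O c g /\
    ((exists b1 b2 : R, b1 <> 1 /\ (b1, b2) <> (0, 0) /\ lin_equiv g (Gc2 b1 b2))
     \/ (exists c0 : R, lin_equiv g (G51 c0))
     \/ lin_equiv g G50).
Proof.
  intros _ _ _ [a1 [a2 [b1 [b2 [d1 [d2 [Q1 [Q2 [Q3 [Hind _]]]]]]]]]].
  assert (F1 : (fun x y => exp (linfun a1 a2 x y) * cos (linfun b1 b2 x y)) = fam a1 a2 b1 b2 1 0).
  { apply functional_extensionality; intro x; apply functional_extensionality; intro y.
    unfold fam, linfun; ring. }
  assert (F2 : (fun x y => exp (linfun a1 a2 x y) * sin (linfun b1 b2 x y)) = fam a1 a2 b1 b2 0 1).
  { apply functional_extensionality; intro x; apply functional_extensionality; intro y.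
    unfold fam, linfun; ring. }
  assert (F3 : (fun x y => exp (linfun d1 d2 x y)) = fam d1 d2 0 0 1 0).
  { apply functional_extensionality; intro x; apply functional_extensionality; intro y.
    unfold fam, linfun. replace (0 * x + 0 * y) with 0 by ring. rewrite cos_0, sin_0; ring. }
  rewrite F1, F2, F3 in *.
  destruct (classic (exists x y, O x y)) as [[x0 [y0 H0]]|Hne].
  2:{ exfalso. destruct (Hind 1 0 0) as [H _]; [|lra].
      intros x y Hxy; exfalso; apply Hne; eauto. }
  assert (Hb : b1 <> 0 \/ b2 <> 0).
  { destruct (Req_dec b1 0) as [E1|E1]; [|auto].
    destruct (Req_dec b2 0) as [E2|E2]; [|auto].
    exfalso; subst b1 b2.
    destruct (Hind 0 1 0) as [_ [H _]]; [|lra].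
    intros x y _; unfold linfun. replace (0 * x + 0 * y) with 0 by ring.
    rewrite sin_0; ring. }
  assert (EQ := fun x y => eqs O c a1 a2 b1 b2 d1 d2 x y Q1 Q2 Q3).
  set (D := (a1 - d1) * b2 - (a2 - d2) * b1).
  assert (HD : D <> 0).
  { intro HD0.
    destruct Hb as [Hb|Hb].
    - destruct (EQ x0 y0 H0 I1 I1) as [P Q]; simpl in P, Q.
      assert (K : b1 * (a1 * a1 - b1 * b1 - d1 * d1) - (a1 - d1) * (a1 * b1 + b1 * a1)
                  = - Gam c I1 I1 I2 x0 y0 * D).
      { simpl; rewrite P, Q; unfold D; ring. }
      rewrite HD0 in K.
      assert (K2 : b1 * ((a1 - d1) * (a1 - d1) + b1 * b1) = 0) by lra.
      apply Rmult_integral in K2; destruct K2 as [K2|K2]; [contradiction|pose proof (Rle_0_sqr (a1 - d1)); pose proof (Rsqr_pos_lt b1 Hb); unfold Rsqr in *; lra].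
    - destruct (EQ x0 y0 H0 I2 I2) as [P Q]; simpl in P, Q.
      assert (K : b2 * (a2 * a2 - b2 * b2 - d2 * d2) - (a2 - d2) * (a2 * b2 + b2 * a2)
                  = Gam c I2 I2 I1 x0 y0 * D).
      { simpl; rewrite P, Q; unfold D; ring. }
      rewrite HD0 in K.
      assert (K2 : b2 * ((a2 - d2) * (a2 - d2) + b2 * b2) = 0) by lra.
      apply Rmult_integral in K2; destruct K2 as [K2|K2]; [contradiction|pose proof (Rle_0_sqr (a2 - d2)); pose proof (Rsqr_pos_lt b2 Hb); unfold Rsqr in *; lra]. }
  set (G := fun i j k => Gam c i j k x0 y0).
  exists (CC (G I1 I1 I1) (G I1 I1 I2) (G I1 I2 I1) (G I1 I2 I2) (G I2 I2 I1) (G I2 I2 I2)).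
  split.
  - intros x y Hxy i j k.
    assert (U : forall i j, Gam c i j I1 x y = G i j I1 /\ Gam c i j I2 x y = G i j I2).
    { intros i0 j0. destruct (EQ x y Hxy i0 j0) as [P Q].
      destruct (EQ x0 y0 H0 i0 j0) as [P0 Q0].
      apply (uniq2 (a1 - d1) (a2 - d2) b1 b2); [exact HD| |]; unfold G; lra. }
    destruct (U i j) as [U1 U2].
    destruct i, j, k; simpl in *; unfold G in *; auto.
  - set (p := (d1 * b2 - b1 * d2) / D).
    set (q := ((a1 - d1) * d2 - (a2 - d2) * d1) / D).
    assert (S1 : lin_equiv (CC (G I1 I1 I1) (G I1 I1 I2) (G I1 I2 I1) (G I1 I2 I2) (G I2 I2 I1) (G I2 I2 I2)) (Gp p q)).
    { apply (step1 a1 a2 b1 b2 d1 d2 (a1 - d1) (a2 - d2)); try ring.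
      - unfold p, q, D in *; field; auto.
      - unfold p, q, D in *; field; auto.
      - exact HD.
      - intros i j; apply (EQ x0 y0 H0 i j). }
    destruct (Req_dec (1 + p) 0) as [Hp|Hp].
    + right; left. exists q. apply (lin_trans _ _ _ S1).
      replace p with (-1) by lra. apply stepA.
    + destruct (Req_dec p 0) as [Hp0|Hp0]; [destruct (Req_dec q 0) as [Hq0|Hq0]|].
      * right; right. apply (lin_trans _ _ _ S1). rewrite Hp0, Hq0. apply stepB.
      * left. exists (p / (1 + p)), (q / (1 + p)). split; [|split].
        -- intro E. assert (Hh : p = p / (1 + p) * (1 + p)) by (field; auto).
           rewrite E in Hh. lra.
        -- intro E. injection E as E1 E2. apply Hq0.
           assert (Hh : q = q / (1 + p) * (1 + p)) by (field; auto).
           rewrite E2 in Hh. lra.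
        -- apply (lin_trans _ _ _ S1). apply stepC; auto.
      * left. exists (p / (1 + p)), (q / (1 + p)). split; [|split].
        -- intro E. assert (Hh : p = p / (1 + p) * (1 + p)) by (field; auto).
           rewrite E in Hh. lra.
        -- intro E. injection E as E1 E2. apply Hp0.
           assert (Hh : p = p / (1 + p) * (1 + p)) by (field; auto).
           rewrite E1 in Hh. lra.
        -- apply (lin_trans _ _ _ S1). apply stepC; auto.
Qed.
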